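(* Let $n\ge4$ be even, $p\ge n+1$ an integer, $c_1$ a positive integer, $a_k=pc_k$, $c_{k+1}=p^2c_k$, and let $T$, $I^{(j)}$, $I^{(j)}_i$ and $\lambda_k$ be as in the context. Then for every odd $k$ with $3\le k\le n-1$ and every $j\ge1$: (1) $\dfrac{\lambda_k(I^{(j)}_k)}{\lambda_k(I^{(j)})}>\dfrac12$; (2) $\dfrac{\lambda_k\bigl(\bigcup_{2\le i\le n-1,\ i\ne k}I^{(j)}_i\bigr)}{\lambda_k(I^{(j)})}<\dfrac{n}{2c_j}$.
   Context: $\pi$ is the permutation of $\{1,\dots,n\}$ with top row $1,2,\dots,n$ and bottom row $n,3,2,5,4,\dots,n-1,n-2,1$. Right Rauzy induction: step ''0'' when the rightmost domain (top) interval is longer, ''1'' when the rightmost image (bottom) interval is longer. For $a,c>0$, $\dot\gamma_{m,a}=1^{n-1-m}0^a10^2$, $\gamma_{a,c}=0\,\dot\gamma_{n-2,a}\cdots\dot\gamma_{2,a}\,1^{c(n-1)}$; its transition matrix $\Theta_{a,c}$ (old lengths $=\Theta_{a,c}\cdot$new lengths) has row $1=(1,c,\dots,c)$, row $n=(1,c+1,\dots,c+1)$, and for $1\le i\le(n-2)/2$: row $2i$ has $0$ in column 1, $2$ in columns $2i,2i+1$, $1$ in the other columns among $2,\dots,n$; row $2i+1$ has $a$ in column $2i$, $a+1$ in column $2i+1$, $0$ elsewhere. $\Theta_k=\Theta_{a_k,c_k}$. $T$ is an IET of $[0,1)$ with permutation $\pi$ whose right Rauzy induction path is $\gamma_{a_1,c_1}\gamma_{a_2,c_2}\cdots$;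 $I^{(j)}$ is the interval on which the induced map lives after the first $j$ blocks and $I^{(j)}_1,\dots,I^{(j)}_n$ its exchanged subintervals; lengths satisfy $\ell^{(j-1)}=\Theta_j\ell^{(j)}$. For $v\ge0$, $|v|$ is the sum of entries and $\overline v=v/|v|$. $\lambda_k$ denotes the $T$-invariant Borel probability measure such that for every $j\ge0$, $(\lambda_k(I^{(j)}_i))_i$ is a positive multiple of $\lim_{m\to\infty}\overline{\Theta_{j+1}\cdots\Theta_me_k}$. *)

(* Defs.v *)
From HB Require Import structures.
From mathcomp Require Import all_boot all_order all_algebra.
From mathcomp Require Import all_classical all_reals all_analysis.
Set Implicit Arguments. Unset Strict Implicit. Unset Printing Implicit Defensive.
Import Order.TTheory GRing.Theory Num.Theory.
Import numFieldNormedType.Exports.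
Local Open Scope classical_set_scope.
Local Open Scope ring_scope.

Section Defs.
Variable R : realType.
Variable n : nat.

(* Theta_{a,c} with the 1-based description of the paper: entry (r,s) with
   r = i+1, s = j+1. *)
Definition Theta (a c : nat) : 'M[R]_n :=
  \matrix_(i < n, j < n)
    (let r := i.+1 in let s := j.+1 in
     if r == 1%N then (if s == 1%N then 1 else c%:R)
     else if r == n then (if s == 1%N then 1 else (c + 1)%:R)
     else if odd r then
       (if s == r.-1 then a%:R else if s == r then (a + 1)%:R else 0)
     else
       (if s == 1%N then 0 else if (s == r) || (s == r.+1) then 2 else 1)).

Definition cseq (c1 p j : nat) : nat := (c1 * p ^ (2 * j.-1))%N.
Definition aseq (c1 p j : nat) : nat := (p * cseq c1 p j)%N.

Definition ThetaK (c1 p j : nat) : 'M[R]_n := Theta (aseq c1 p j) (cseq c1 p j).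

Definition prodTheta (c1 p j m : nat) : 'M[R]_n :=
  foldr (fun l M => ThetaK c1 p l *m M) 1%:M (iota j.+1 (m - j)).

Definition vsum (v : 'cV[R]_n) : R := \sum_(i < n) v i 0.
Definition vnormalize (v : 'cV[R]_n) : 'cV[R]_n := (vsum v)^-1 *: v.

End Defs.

(* Main.v *)
Require Import Defs.
From HB Require Import structures.
From mathcomp Require Import all_boot all_order all_algebra.
From mathcomp Require Import all_classical all_reals all_analysis.
From mathcomp Require Import zify ring lra.
Import Order.TTheory GRing.Theory Num.Theory.
Import numFieldNormedType.Exports.
Local Open Scope classical_set_scope.
Local Open Scope ring_scope.
Set Implicit Arguments. Unset Strict Implicit.

Section Ent.
Variables (R : realType) (n a c : nat).
Let Th := Theta R n a c.
Lemma Th_ge0 i s : 0 <= Th i s.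
Proof. rewrite /Th /Theta mxE /=.
by repeat case: ifP => _; rewrite ?ler0n ?ler01 ?lexx. Qed.
Lemma Th_odd (i s : 'I_n) : i.+1 != 1%N -> i.+1 != n -> odd i.+1 ->
  Th i s = if s.+1 == i then a%:R else if s == i :> nat then (a+1)%:R else 0.
Proof. move=> h1 hn /= ho; rewrite /Th /Theta mxE /=.
by rewrite (negbTE h1) (negbTE hn) ho eqSS. Qed.
Lemma Th_row0 (i s : 'I_n) : i.+1 == 1%N -> (1 <= c)%N -> Th i s <= c%:R.
Proof. move=> h1 hc; rewrite /Th /Theta mxE /= h1.
by case: ifP => _; rewrite ?ler1n ?lexx. Qed.
Lemma Th_rowl (i s : 'I_n) : i.+1 != 1%N -> i.+1 == n -> Th i s <= (c+1)%:R.
Proof. move=> h1 hn; rewrite /Th /Theta mxE /= (negbTE h1) hn.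
by case: ifP => _; rewrite ?ler1n ?lexx ?addn1. Qed.
Lemma Th_even (i s : 'I_n) : i.+1 != 1%N -> i.+1 != n -> ~~ odd i.+1 -> Th i s <= 2.
Proof. move=> h1 hn /= /negPn ho; rewrite /Th /Theta mxE /= (negbTE h1) (negbTE hn) ho /=.
case: ifP => _; first by rewrite ler0n.
case: ifP => _; first by rewrite lexx.
by rewrite ler1n. Qed.

Variable u : 'cV[R]_n.
Hypothesis u0 : forall s, 0 <= u s 0.

Lemma mul_ge0 i : 0 <= (Th *m u) i 0.
Proof. rewrite mxE; apply: sumr_ge0 => s _; apply: mulr_ge0 => //; exact: Th_ge0. Qed.

Lemma mul_le i (B : R) : (forall s, Th i s <= B) -> (Th *m u) i 0 <= B * vsum u.
Proof. move=> hB; rewrite mxE /vsum mulr_sumr; apply: ler_sum => s _.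
by apply: ler_wpM2r. Qed.

Lemma mul_diag i : Th i i * u i 0 <= (Th *m u) i 0.
Proof. rewrite [X in _ <= X]mxE (bigD1 i) //= lerDl; apply: sumr_ge0 => s _.
apply: mulr_ge0 => //; exact: Th_ge0. Qed.

Lemma mul_odd (i i' : 'I_n) : i.+1 != 1%N -> i.+1 != n -> odd i.+1 -> i'.+1 = i ->
  (Th *m u) i 0 = a%:R * u i' 0 + (a+1)%:R * u i 0.
Proof. move=> h1 hn ho hi.
have ii : i' != i by apply/eqP => e; move: hi; rewrite e; lia.
rewrite mxE (bigD1 i) //= (bigD1 i') //= big1.
  rewrite !Th_odd // hi eqxx gtn_eqF // addr0 addrC; done.
move=> s /andP [si si']; rewrite Th_odd //.
have -> : (s.+1 == i) = false.
  apply/negbTE; apply: contra si' => /eqP e; apply/eqP; apply: val_inj => /=; lia.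
by rewrite ifF ?mul0r //; exact: negbTE si.
Qed.
End Ent.
Lemma nA (i n : nat) : (2 <= i.+1 <= n - 1)%N -> i.+1 != 1%N /\ i.+1 != n.
Proof. move=> h; split; apply/eqP; lia. Qed.
Lemma nB (i n : nat) : (2 <= i.+1 <= n - 1)%N -> i != 1%N ->
  (i.-1 < n)%N /\ (i.-1).+1 = i /\ (2 <= (i.-1).+1 <= n - 1)%N.
Proof. move=> h /eqP h1; split; [|split]; lia. Qed.

Lemma nC (n : nat) (k : nat) : (4 <= n)%N -> (3 <= k.+1 <= n - 1)%N ->
  [/\ (0 < n)%N, (n.-1 < n)%N, (k != 0)%N, (k != n.-1)%N & (n.-1 != 0)%N].
Proof. move=> h1 h2; split; try apply/eqP; lia. Qed.
Lemma nD (n i : nat) : (i < n)%N -> (i != 0)%N -> (i != n.-1)%N -> (2 <= i.+1 <= n - 1)%N.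
Proof. move=> h1 /eqP h2 /eqP h3; lia. Qed.
Lemma fin (R : realType) (X A U uk vk S : R) : 0 <= U -> 0 <= A -> X <= 49/100 * A ->
  51/100 * U <= uk -> A * uk <= vk -> S <= vk + X * U -> 51/100 * S <= vk.
Proof. move=> U0 A0 hX hu hv hS.
have h1 : X * U <= 49/100 * A * U by apply: ler_wpM2r.
have h2 : A * (51/100 * U) <= A * uk by apply: ler_wpM2l.
nra. Qed.

Section Step.
Variables (R : realType) (n p c : nat) (k : 'I_n).
Hypotheses (Hn : (4 <= n)%N) (Hp : (n + 1 <= p)%N) (Hc : (p^2 <= c)%N)
  (Hkodd : odd k.+1) (Hk : (3 <= k.+1 <= n - 1)%N).

Definition Qb (i : 'I_n) : bool := (2 <= i.+1 <= n - 1)%N && (i != k).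
Definition beta : R := 51/100.
Definition Inv (B : R) (u : 'cV[R]_n) :=
  [/\ forall i, 0 <= u i 0, 0 < u k 0, beta * vsum u <= u k 0 &
      forall i, Qb i -> u i 0 <= B * vsum u].

Lemma vsum_ge (u : 'cV[R]_n) i : (forall s, 0 <= u s 0) -> u i 0 <= vsum u.
Proof. move=> h; rewrite /vsum (bigD1 i) //= lerDl; exact: sumr_ge0. Qed.

Lemma sum_rest_le (f : 'I_n -> R) (P : pred 'I_n) (M : R) : 0 <= M ->
  (forall i, P i -> f i <= M) -> \sum_(i | P i) f i <= n%:R * M.
Proof. move=> M0 h; apply: le_trans (ler_sum _ h) _.
rewrite sumr_const -[M *+ _]mulr_natl; apply: ler_wpM2r => //; rewrite ler_nat.
by apply: leq_trans (max_card _) _; rewrite card_ord. Qed.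

Lemma arF3 : (p*c+1 <= p^2*c)%N.
Proof. clear -Hn Hp Hc; nia. Qed.
Lemma arF4 : (0 < p^2*c)%N.
Proof. clear -Hn Hp Hc; nia. Qed.
Lemma arF0 : (0 < c)%N.
Proof. clear -Hn Hp Hc; nia. Qed.
Lemma arF1 : (2*c+1+2*n)%:R <= 49/100 * (p*c+1)%:R :> R.
Proof.
have h : (100*(2*c+1+2*n) <= 49*(p*c+1))%N by nia.
by move: h; rewrite -(ler_nat R) !natrM !natrD; lra.
Qed.
Lemma arF2 : 2 * c%:R <= beta * (p*c+1)%:R :> R.
Proof.
have h : (200*c <= 51*(p*c+1))%N by nia.
by move: h; rewrite /beta -(ler_nat R) !natrM !natrD; lra.
Qed.

Lemma step (u : 'cV[R]_n) : Inv ((p^2*c)%N%:R^-1) u ->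
  Inv (c%:R^-1) (Theta R n (p*c) c *m u).
Proof.
case=> u0 uk ub uQ.
set a := (p * c)%N.
set Th := Theta R n a c.
set v := Th *m u.
have c0 : (0 < c)%N by apply: arF0.
have cR0 : 0 < c%:R :> R by rewrite ltr0n.
have k1 : k.+1 != 1%N by apply/eqP; lia.
have kn : k.+1 != n by apply/eqP; lia.
have Thkk : Th k k = (a+1)%:R.
  by rewrite /Th Th_odd // gtn_eqF // eqxx.
have vk : (a+1)%:R * u k 0 <= v k 0 by rewrite -Thkk; exact: mul_diag.
have U0 : 0 < vsum u by apply: lt_le_trans uk (vsum_ge _ u0).
have v0 : forall i, 0 <= v i 0 by move=> i; exact: mul_ge0.
have vkpos : 0 < v k 0.
  by apply: lt_le_trans vk; apply: mulr_gt0 => //; rewrite ltr0n addn1.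
have vsv : v k 0 <= vsum v by exact: vsum_ge.
have F1 : (2*c+1+2*n)%:R <= 49/100 * (a+1)%:R :> R by exact: arF1.
have F2 : 2 * c%:R <= beta * (a+1)%:R :> R by exact: arF2.
have F3 : (a+1)%:R * (p^2*c)%N%:R^-1 <= 1 :> R.
  rewrite ler_pdivrMr ?ltr0n; last exact: arF4.
  by rewrite mul1r ler_nat /a; apply: arF3.
have vQ : forall i, Qb i -> v i 0 <= 2 * vsum u.
  move=> i /andP [hi ik].
  have [i1 iN] := nA hi.
  case ho: (odd i.+1).
    have ine : (i : nat) != 1%N by apply/eqP => e; rewrite e in ho.
    have [i'lt [hi'0 hi'1]] := nB hi ine.
    pose i' := Ordinal i'lt.
    have hi' : i'.+1 = i by exact: hi'0.
    rewrite /v /Th (mul_odd a c u i1 iN ho hi').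
    have Qi : Qb i by apply/andP.
    have Qi' : Qb i'.
      apply/andP; split; first exact: hi'1.
      apply/eqP => e; move: ho; rewrite -hi' e /=.
      by move: Hkodd => /= ->.
    have h1 := uQ _ Qi; have h2 := uQ _ Qi'.
    have a0 : 0 <= a%:R :> R by [].
    have ha : a%:R <= (a+1)%:R :> R by rewrite ler_nat leq_addr.
    apply: le_trans (_ : (a+1)%:R * (u i' 0 + u i 0) <= _).
      rewrite mulrDr lerD2r; apply: ler_wpM2r => //.
    set B := (p^2*c)%N%:R^-1 in h1 h2 F3.
    have G2 : (a+1)%:R * (u i' 0 + u i 0) <= (a+1)%:R * (2 * B * vsum u).
      apply: ler_wpM2l => //.
      rewrite (_ : 2 * B * vsum u = B * vsum u + B * vsum u); first exact: lerD.
      by rewrite -mulrA mulr_natl mulr2n.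
    have G1 : (a+1)%:R * B * (2 * vsum u) <= 2 * vsum u.
      rewrite -[X in _ <= X]mul1r; apply: ler_wpM2r => //.
      by apply: mulr_ge0 => //; apply: ltW.
    apply: le_trans G2 _; apply: le_trans G1.
    by rewrite (mulrC 2 B) -!mulrA.
  rewrite /v; apply: mul_le => // s; apply: Th_even => //; by rewrite ho.
split => //.
- have [n0 [nl [k0 [kl l0]]]] := nC Hn Hk.
  pose i0 : 'I_n := Ordinal n0.
  pose il : 'I_n := Ordinal nl.
  have dk0 : i0 != k by rewrite -val_eqE /= eq_sym.
  have dkl : il != k by rewrite -val_eqE /= eq_sym.
  have d0l : il != i0 by rewrite -val_eqE /=.
  have hdec : vsum v = v k 0 + v i0 0 + v il 0 +
      \sum_(i | [&& i != k, i != i0 & i != il]) v i 0.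
    rewrite /vsum (bigD1 k) //= (bigD1 i0) //= (bigD1 il) /=; last by rewrite d0l dkl.
    rewrite !addrA; congr (_ + _); apply: eq_bigl => i; by rewrite andbA.
  have hv0 : v i0 0 <= c%:R * vsum u.
    by apply: mul_le => // s; apply: Th_row0.
  have hvl : v il 0 <= (c+1)%:R * vsum u.
    apply: mul_le => // s; apply: Th_rowl => /=; first by [].
    by rewrite prednK.
  have hrest : \sum_(i | [&& i != k, i != i0 & i != il]) v i 0 <= n%:R * (2 * vsum u).
    apply: sum_rest_le; first by apply: mulr_ge0 => //; apply: ltW.
    move=> i /and3P [ik i0' il']; apply: vQ; apply/andP; split => //.
    move: i0' il'; rewrite -!val_eqE /=; move: (ltn_ord i); exact: nD.
  apply: (fin (X := (2*c+1+2*n)%N%:R) (A := (a+1)%:R) (U := vsum u) (uk := u k 0)) => //.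
  + exact: ltW.
  + rewrite hdec -!addrA lerD2l.
    have -> : (2*c+1+2*n)%N%:R * vsum u = c%:R * vsum u + ((c+1)%:R * vsum u + n%:R * (2 * vsum u)).
      rewrite !natrD; ring.
    exact: (lerD hv0 (lerD hvl hrest)).
- move=> i Qi; apply: le_trans (vQ _ Qi) _.
  rewrite [c%:R^-1 * _]mulrC ler_pdivlMr //.
  have H1 : (a+1)%:R * beta * vsum u <= v k 0.
    by apply: le_trans vk; rewrite -mulrA; apply: ler_wpM2l => //.
  have H2 : 2 * c%:R * vsum u <= beta * (a+1)%:R * vsum u.
    by apply: ler_wpM2r => //; apply: ltW.
  apply: le_trans vsv; apply: le_trans H1.
  rewrite [(a+1)%:R * _]mulrC; apply: le_trans H2.
  by rewrite mulrAC.
Qed.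
End Step.

Lemma cseqS c1 p j : (1 <= j)%N -> cseq c1 p j.+1 = (p^2 * cseq c1 p j)%N.
Proof.
case: j => // j _; rewrite /cseq /= mulnS expnD.
by rewrite mulnCA.
Qed.

Lemma cseq_gt0 c1 p j : (0 < c1)%N -> (0 < p)%N -> (0 < cseq c1 p j)%N.
Proof. by move=> h1 h2; rewrite /cseq muln_gt0 h1 expn_gt0 h2. Qed.

Lemma col_mulmx (R : realType) n (A B : 'M[R]_n) (k : 'I_n) :
  col k (A *m B) = A *m col k B.
Proof. by rewrite !colE mulmxA. Qed.

Lemma ek_Inv (R : realType) n (k : 'I_n) (B : R) : 0 <= B ->
  Inv k B (col k (1%:M : 'M[R]_n)).
Proof.
move=> B0.
have E : forall i, col k (1%:M : 'M[R]_n) i 0 = (i == k)%:R by move=> i; rewrite !mxE.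
have S : vsum (col k (1%:M : 'M[R]_n)) = 1.
  rewrite /vsum (bigD1 k) //= E eqxx big1 ?addr0 // => i ik.
  by rewrite E (negbTE ik).
split.
- by move=> i; rewrite E ler0n.
- by rewrite E eqxx ltr01.
- rewrite S E eqxx mulr1 /beta; change (51/100 <= (1%:R : R)); lra.
- move=> i /andP [_ ik]; rewrite E (negbTE ik) S mulr1 //.
Qed.

Lemma invariant (R : realType) (n p c1 : nat) (k : 'I_n)
  (Hn : (4 <= n)%N) (Hp : (n + 1 <= p)%N) (Hc1 : (0 < c1)%N)
  (Hkodd : odd k.+1) (Hk : (3 <= k.+1 <= n - 1)%N) :
  forall d j m, (1 <= j)%N -> (m - j)%N = d ->
  Inv k ((p^2 * cseq c1 p j)%N%:R^-1) (col k (prodTheta R n c1 p j m)).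
Proof.
have p0 : (0 < p)%N by apply: leq_trans Hp; rewrite addn1.
elim=> [|d IH] j m hj hd.
  rewrite /prodTheta hd /=; apply: ek_Inv.
  by rewrite invr_ge0 ler0n.
have hd' : (m - j.+1)%N = d by rewrite subnS hd.
have -> : prodTheta R n c1 p j m = ThetaK R n c1 p j.+1 *m prodTheta R n c1 p j.+1 m.
  by rewrite /prodTheta hd hd'.
rewrite col_mulmx /ThetaK /aseq -(@cseqS c1 p j hj).
apply: step => //.
- by rewrite (@cseqS c1 p j hj) -{1}(muln1 (p^2)%N) leq_mul2l cseq_gt0 ?orbT.
- exact: IH.
Qed.

Lemma bigcup_ordP (T : Type) n (P : pred 'I_n) (F : 'I_n -> set T) :
  \bigcup_(i in [set i | P i]) F i = \big[setU/set0]_(i < n | P i) F i.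
Proof. by rewrite -bigcup_pred. Qed.

Lemma last_ineq (R : realType) (n p c : nat) : (4 <= n)%N -> (n + 1 <= p)%N -> (0 < c)%N ->
  n%:R * ((p^2 * c)%N%:R)^-1 < n%:R / (2 * c%:R) :> R.
Proof.
move=> h1 h2 h3.
have p5 : (5 <= p)%N by clear -h1 h2; lia.
have pp : (p^2 = p * p)%N by rewrite expnS expn1.
have p25 : (25 <= p * p)%N := leq_mul p5 p5.
have hh : (2 * c < p^2 * c)%N by rewrite pp ltn_pmul2r //; apply: leq_trans p25.
have hp : (0 < p^2 * c)%N by rewrite pp muln_gt0 h3 andbT; apply: leq_trans p25.
rewrite ltr_pM2l ?ltr0n; last by clear -h1; lia.
rewrite ltf_pV2 ?posrE ?ltr0n //; last by rewrite mulr_gt0 ?ltr0n.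
by rewrite -natrM ltr_nat.
Qed.

Unset Implicit Arguments. Set Strict Implicit.

Theorem mainTheorem4 (R : realType) (n p c1 : nat)
  (Hn : (4 <= n)%N) (Hneven : ~~ odd n) (Hp : (n + 1 <= p)%N) (Hc1 : (0 < c1)%N)
  (k : 'I_n) (Hkodd : odd k.+1) (Hk : (3 <= k.+1 <= n - 1)%N)
  (I : nat -> set R) (Isub : nat -> 'I_n -> set R)
  (lam : {measure set R -> \bar R})
  (L : nat -> 'I_n -> R)
  (HImeas : forall j i, measurable (Isub j i))
  (HIdisj : forall j (i i' : 'I_n), i != i' -> Isub j i `&` Isub j i' = set0)
  (HIunion : forall j, I j = \bigcup_(i in [set: 'I_n]) Isub j i)
  (HL : forall j (i : 'I_n),
      (fun m => vnormalize (col k (prodTheta R n c1 p j m)) i 0) @ \oo --> L j i)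
  (Hlam : forall j, exists2 t : R, 0 < t &
      forall i, lam (Isub j i) = (t * L j i)%:E) :
  forall j, (1 <= j)%N ->
    1 / 2 < fine (lam (Isub j k)) / fine (lam (I j)) /\
    fine (lam (\bigcup_(i in [set i : 'I_n | (2 <= i.+1 <= n - 1)%N /\ i != k])
                  Isub j i)) / fine (lam (I j))
      < n%:R / (2 * (cseq c1 p j)%:R).
Proof.
move=> j hj.
have hI := fun m => @invariant R n p c1 k Hn Hp Hc1 Hkodd Hk (m - j)%N j m hj erefl.
set B : R := ((p^2 * cseq c1 p j)%N)%:R^-1 in hI.
pose w m := col k (prodTheta R n c1 p j m).
pose N m i := vnormalize (w m) i 0.
have NE m i : N m i = (vsum (w m))^-1 * w m i 0 by rewrite /N /vnormalize mxE.
have facts m : [/\ forall i, 0 <= N m i, beta R <= N m k,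
    \sum_(i | true) N m i = 1 & forall i, Qb k i -> N m i <= B].
  case: (hI m) => w0 wk wb wQ.
  have S0 : 0 < vsum (w m) by apply: lt_le_trans wk (vsum_ge k w0).
  split.
  - move=> i; rewrite NE; apply: mulr_ge0 => //; rewrite invr_ge0; exact: ltW.
  - by rewrite NE mulrC ler_pdivlMr.
  - under eq_bigr do rewrite NE.
    by rewrite -mulr_sumr mulVf // gt_eqF.
  - by move=> i Qi; rewrite NE mulrC ler_pdivrMr // ; exact: wQ.
have cvgS (P : pred 'I_n) :
    (fun m => \sum_(i | P i) N m i) @ \oo --> \sum_(i | P i) L j i.
  apply: (@cvg_big R^o 'I_n +%R 0 P add_continuous nat \oo (index_enum _) (fun i m => N m i) (L j)) => // i _.
  exact: HL.
have Lk : beta R <= L j k.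
  apply: (ler_cvg_to (cvg_cst _) (HL j k)); apply: nearW => m.
  by case: (facts m).
have S1 : \sum_(i | true) L j i = 1.
  have h := cvgS (fun=> true).
  apply/eqP; rewrite eq_le; apply/andP; split.
    apply: (ler_cvg_to h (cvg_cst (1 : R))); apply: nearW => m.
    by case: (facts m) => _ _ -> _.
  apply: (ler_cvg_to (cvg_cst (1 : R)) h); apply: nearW => m.
  by case: (facts m) => _ _ -> _.
have B0 : 0 <= B by rewrite invr_ge0 ler0n.
have SQ : \sum_(i | Qb k i) L j i <= n%:R * B.
  apply: sum_rest_le => // i Qi.
  apply: (ler_cvg_to (HL j i) (cvg_cst B)); apply: nearW => m.
  by case: (facts m) => _ _ _; apply.
have [t t0 Ht] := Hlam j.
have triv : trivIset setT (Isub j).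
  move=> i i' _ _ [x hx]; apply/eqP; apply/negPn/negP => /(HIdisj j) e.
  by move: hx; rewrite e.
have mU (P : pred 'I_n) :
    fine (lam (\bigcup_(i in [set i | P i]) Isub j i)) = t * \sum_(i | P i) L j i.
  rewrite bigcup_ordP measure_bigsetU_ord //.
  rewrite (eq_bigr (fun i => (t * L j i)%:E)); last by move=> i _; exact: Ht.
  by rewrite sumEFin /= mulr_sumr.
have EI : fine (lam (I j)) = t.
  rewrite HIunion.
  have -> : [set: 'I_n] = [set i | (fun=> true) i] by apply/seteqP; split => i.
  by rewrite mU S1 mulr1.
have EQ : [set i : 'I_n | (2 <= i.+1 <= n - 1)%N /\ i != k] = [set i | Qb k i].
  apply/seteqP; split => i /=; first by case=> h1 h2; apply/andP.
  by case/andP.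
rewrite EI EQ mU Ht /=.
split.
  rewrite [t * _]mulrC mulfK ?gt_eqF //.
  by move: Lk; rewrite /beta; lra.
rewrite [t * _]mulrC mulfK ?gt_eqF //.
apply: le_lt_trans SQ _.
apply: last_ineq => //.
apply: cseq_gt0 => //; apply: leq_trans Hp; by rewrite addn1.
Qed.
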